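(* Let $E \subseteq \mathbb{R}$. Then at least one of the following holds: (1) there is $u \in \mathbb{S}$ such that the restriction of $T_u$ to $E^2$ is a quasi-isometric embedding $E^2 \to \mathbb{R}$; (2) there is a linear map $S : \mathbb{R}^4 \to \mathbb{R}$ such that $S(E^4)$ is dense in $\mathbb{R}$.
   Context: $\mathbb{S}$ is the unit circle in $\mathbb{R}^2$. For $u = (u_1,u_2) \in \mathbb{S}$, $T_u : \mathbb{R}^2 \to \mathbb{R}$ is the orthogonal projection parallel to $u$, i.e. $T_u(x) = \langle x,(u_2,-u_1)\rangle$. For $\lambda,\delta>0$, a map $f : X \to Y$ between subsets of Euclidean spaces is a $(\lambda,\delta)$-quasi-isometry if $\frac{1}{\lambda}\|x-x'\| - \delta \leq \|f(x)-f(x')\| \leq \lambda\|x-x'\| + \delta$ for all $x,x' \in X$ and every $y \in Y$ is within distance $<\delta$ of some $f(x)$; a quasi-isometry is a $(\lambda,\delta)$-quasi-isometry for some $\lambda,\delta > 0$. A map $g : X \to \mathbb{R}$ is a quasi-isometric embedding if it is a quasi-isometry $X \to g(X)$. *)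

(* Defs.v *)
From Stdlib Require Import Reals.
Open Scope R_scope.

Definition R2 := (R * R)%type.
Definition R4 := (R * R * R * R)%type.

Definition dist2 (x y : R2) : R :=
  sqrt ((fst x - fst y) ^ 2 + (snd x - snd y) ^ 2).
Definition dist1 (x y : R) : R := Rabs (x - y).

Definition in_circle (u : R2) : Prop := (fst u) ^ 2 + (snd u) ^ 2 = 1.

Definition T (u : R2) (x : R2) : R := fst x * snd u + snd x * (- fst u).

Definition sq (E : R -> Prop) : R2 -> Prop := fun x => E (fst x) /\ E (snd x).

Definition pow4 (E : R -> Prop) : R4 -> Prop :=
  fun x => match x with (a, b, c, d) => E a /\ E b /\ E c /\ E d end.

Definition quasi_isometry_ld (X : R2 -> Prop) (Y : R -> Prop) (f : R2 -> R)
  (lam del : R) : Prop :=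
  (forall x x', X x -> X x' ->
     / lam * dist2 x x' - del <= dist1 (f x) (f x') /\
     dist1 (f x) (f x') <= lam * dist2 x x' + del) /\
  (forall y, Y y -> exists x, X x /\ dist1 y (f x) < del).

Definition quasi_isometry (X : R2 -> Prop) (Y : R -> Prop) (f : R2 -> R) : Prop :=
  exists lam del, 0 < lam /\ 0 < del /\ quasi_isometry_ld X Y f lam del.

Definition qi_embedding (X : R2 -> Prop) (g : R2 -> R) : Prop :=
  quasi_isometry X (fun y => exists x, X x /\ g x = y) g.

Definition add4 (x y : R4) : R4 :=
  match x, y with (a, b, c, d), (a', b', c', d') => (a + a', b + b', c + c', d + d') end.
Definition scal4 (k : R) (x : R4) : R4 :=
  match x with (a, b, c, d) => (k * a, k * b, k * c, k * d) end.
Definition linear4 (S : R4 -> R) : Prop :=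
  (forall x y, S (add4 x y) = S x + S y) /\ (forall k x, S (scal4 k x) = k * S x).

Definition dense_in_R (A : R -> Prop) : Prop :=
  forall r eps, 0 < eps -> exists a, A a /\ Rabs (r - a) < eps.

(* Main.v *)
Require Import Defs.
From Stdlib Require Import Reals Lra Lia Cantor.
From Stdlib Require Import Classical.
Open Scope R_scope.


Lemma cs_ineq (p q u1 u2 : R) : u1^2 + u2^2 = 1 ->
  Rabs (p*u2 - q*u1) <= sqrt (p^2 + q^2).
Proof.
intros H.
rewrite <- sqrt_Rsqr_abs.
apply sqrt_le_1_alt.
unfold Rsqr.
assert (0 <= (p*u1 + q*u2)^2) by apply pow2_ge_0.
replace (p^2+q^2) with ((p^2+q^2)*(u1^2+u2^2)) by (rewrite H; ring).
assert (E1 : (p^2+q^2)*(u1^2+u2^2) - (p*u2-q*u1)*(p*u2-q*u1) = (p*u1+q*u2)^2) by ring.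
lra.
Qed.

Lemma T_diff u x x' : T u x - T u x' = (fst x - fst x')*snd u - (snd x - snd x')*fst u.
Proof. unfold T; ring. Qed.

Lemma dist2_nonneg x x' : 0 <= dist2 x x'.
Proof. unfold dist2; apply sqrt_pos. Qed.

Lemma witness (E : R -> Prop) (u : R2) : in_circle u ->
  ~ qi_embedding (sq E) (T u) ->
  forall lam del, 1 <= lam -> 0 < del ->
  exists x x', sq E x /\ sq E x' /\ dist1 (T u x) (T u x') < / lam * dist2 x x' - del.
Proof.
intros Hc Hq lam del Hl Hd.
apply Classical_Prop.NNPP; intro Hn.
apply Hq. exists lam, del. split; [lra|]. split; [exact Hd|]. split.
- intros x x' Hx Hx'. split.
  + apply Rnot_lt_le. intro Hlt. apply Hn. exists x, x'. auto.
  + assert (H1 : dist1 (T u x) (T u x') <= dist2 x x').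
    { unfold dist1, dist2. rewrite T_diff. apply cs_ineq. exact Hc. }
    pose proof (dist2_nonneg x x'). nra.
- intros y [x [Hx Hy]]. exists x. split; auto. subst y. unfold dist1.
  replace (T u x - T u x) with 0 by ring. rewrite Rabs_R0. exact Hd.
Qed.

Lemma key (E : R -> Prop)
  (Hno : forall u, in_circle u -> ~ qi_embedding (sq E) (T u)) t0 eta r :
  0 < eta ->
  exists t, Rabs (t - t0) < eta /\
    exists a b c d, E a /\ E b /\ E c /\ E d /\ (a - c) - t*(b - d) = r.
Proof.
intros He.
set (N := sqrt (1 + t0^2)).
assert (HN : 0 < N) by (apply sqrt_lt_R0; pose proof (pow2_ge_0 t0); lra).
assert (HN2 : N * N = 1 + t0^2) by (apply sqrt_sqrt; pose proof (pow2_ge_0 t0); lra).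
set (u := (t0 / N, 1 / N)).
assert (Hu : in_circle u).
{ unfold in_circle, u; simpl. field_simplify; [| lra]. replace (N^2) with (N*N) by ring. rewrite HN2. field. pose proof (pow2_ge_0 t0). lra. }
set (K := 2 * (Rabs t0 + 1)).
assert (HK : 2 <= K) by (unfold K; pose proof (Rabs_pos t0); lra).
set (lam := 1 + 2 * N + 2 * N * K / eta).
assert (Hl1 : 2 * N <= lam).
{ unfold lam. assert (0 <= 2*N*K/eta) by (unfold Rdiv; apply Rmult_le_pos; [nra | left; apply Rinv_0_lt_compat; lra]). lra. }
assert (Hl0 : 1 <= lam).
{ unfold lam. assert (0 <= 2*N*K/eta) by (unfold Rdiv; apply Rmult_le_pos; [nra | left; apply Rinv_0_lt_compat; lra]). lra. }
assert (Hl2 : 2 * N * K <= eta * lam).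
{ unfold lam. replace (eta * (1 + 2 * N + 2 * N * K / eta)) with (eta * (1 + 2*N) + 2*N*K) by (field; lra). nra. }
set (del := 2 * K * (Rabs r + 1) / (eta * lam)).
assert (Hd0 : 0 < del).
{ unfold del. apply Rdiv_lt_0_compat; [pose proof (Rabs_pos r); nra | nra]. }
assert (Hdl : del * lam * eta = 2 * K * (Rabs r + 1)).
{ unfold del. field. split; lra. }
destruct (witness E u Hu (Hno u Hu) lam del Hl0 Hd0) as [x [x' [Hx [Hx' Hw]]]].
destruct x as [a b]; destruct x' as [c d].
destruct Hx as [Ea Eb]; destruct Hx' as [Ec Ed]; simpl in *.
set (p := a - c). set (q := b - d).
set (s := dist2 (a, b) (c, d)).
assert (Hs0 : 0 <= s) by apply dist2_nonneg.
assert (Hs2 : s * s = p^2 + q^2).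
{ unfold s, dist2; simpl. apply sqrt_sqrt. pose proof (pow2_ge_0 p); pose proof (pow2_ge_0 q); lra. }
set (A := Rabs (p - t0 * q)).
assert (HA0 : 0 <= A) by apply Rabs_pos.
assert (HW : A < N * (/ lam * s - del)).
{ unfold dist1, T in Hw; simpl in Hw.
  replace (a * (1 / N) + b * - (t0 / N) - (c * (1 / N) + d * - (t0 / N))) with ((p - t0*q) / N) in Hw
    by (unfold p, q; field; lra).
  unfold Rdiv in Hw. rewrite Rabs_mult, Rabs_inv, (Rabs_right N) in Hw by lra.
  fold A in Hw.
  apply (Rmult_lt_compat_l N) in Hw; [| lra].
  replace (N * (A * / N)) with A in Hw by (field; lra). exact Hw. }
assert (HW2 : A * lam < N * s - N * del * lam).
{ replace (N * s - N * del * lam) with (N * (/ lam * s - del) * lam) by (field; lra). nra. }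
assert (Hsdl : del * lam < s) by nra.
assert (Hp : Rabs p <= s).
{ apply Rsqr_incr_0_var; [| exact Hs0]. rewrite <- Rsqr_abs. unfold Rsqr. pose proof (pow2_ge_0 q). nra. }
assert (Hq : Rabs q <= s).
{ apply Rsqr_incr_0_var; [| exact Hs0]. rewrite <- Rsqr_abs. unfold Rsqr. pose proof (pow2_ge_0 p). nra. }
assert (Hspq : s <= Rabs p + Rabs q).
{ apply Rsqr_incr_0_var; [| pose proof (Rabs_pos p); pose proof (Rabs_pos q); lra].
  unfold Rsqr. rewrite Hs2. pose proof (Rabs_pos p); pose proof (Rabs_pos q).
  assert (Rabs p * Rabs p = p^2) by (rewrite <- Rabs_mult; simpl; rewrite Rmult_1_r; apply Rabs_right; nra).
  assert (Rabs q * Rabs q = q^2) by (rewrite <- Rabs_mult; simpl; rewrite Rmult_1_r; apply Rabs_right; nra).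
  nra. }
assert (Hp2 : Rabs p <= Rabs t0 * Rabs q + A).
{ unfold A. rewrite <- Rabs_mult. replace p with (t0 * q + (p - t0 * q)) at 1 by ring. apply Rabs_triang. }
assert (H2A : 2 * A < s).
{ assert (A * (2 * N) <= A * lam) by (apply Rmult_le_compat_l; lra).
  assert (0 <= N * del * lam) by (apply Rmult_le_pos; [apply Rmult_le_pos|]; lra).
  assert (N*(2*A) < N*s) by lra.
  apply Rmult_lt_reg_l with N; lra. }
assert (HsK : s < K * Rabs q).
{ unfold K. lra. }
assert (HKA : 2 * K * A < s * eta).
{ assert (A * (2 * N * K) <= A * (eta * lam)) by (apply Rmult_le_compat_l; lra).
  assert (0 <= N * del * lam) by (apply Rmult_le_pos; [apply Rmult_le_pos|]; lra).
  assert (N*(2*K*A) < N*(s*eta)).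
  { assert (A * lam * eta < (N * s - N * del * lam) * eta) by (apply Rmult_lt_compat_r; lra).
    assert (N * s * eta - N * del * lam * eta <= N * s * eta).
    { assert (0 <= N * del * lam * eta) by (apply Rmult_le_pos; lra). lra. }
    lra. }
  apply Rmult_lt_reg_l with N; lra. }
assert (HKr : 2 * K * Rabs r < s * eta).
{ assert (del * lam * eta < s * eta) by nra. pose proof (Rabs_pos r). nra. }
assert (Hfin : A + Rabs r < eta * Rabs q).
{ assert (K * (A + Rabs r) < K * (eta * Rabs q)) by nra. nra. }
assert (Hq0 : q <> 0).
{ intro Hq0. rewrite Hq0, Rabs_R0 in Hfin. pose proof (Rabs_pos r). lra. }
exists ((p - r) / q). split.
- replace ((p - r) / q - t0) with ((p - t0 * q - r) / q) by (field; exact Hq0).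
  unfold Rdiv. rewrite Rabs_mult, Rabs_inv.
  assert (HqA : 0 < Rabs q) by (apply Rabs_pos_lt; exact Hq0).
  apply (Rmult_lt_reg_r (Rabs q)); [exact HqA|].
  rewrite Rmult_assoc, Rinv_l by lra. rewrite Rmult_1_r.
  assert (Rabs (p - t0 * q - r) <= A + Rabs r).
  { unfold A. unfold Rminus at 1. rewrite <- (Rabs_Ropp r). apply Rabs_triang. }
  lra.
- exists a, b, c, d. repeat split; auto.
  fold p q. field. exact Hq0.
Qed.

Definition tgt (n : nat) : R :=
  (INR (fst (Cantor.of_nat (fst (Cantor.of_nat n)))) - INR (snd (Cantor.of_nat (fst (Cantor.of_nat n)))))
  / (INR (snd (Cantor.of_nat n)) + 1).
Definition epsn (n : nat) : R := / (INR (snd (Cantor.of_nat n)) + 1).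

Lemma epsn_pos n : 0 < epsn n.
Proof. unfold epsn. apply Rinv_0_lt_compat. pose proof (pos_INR (snd (Cantor.of_nat n))). lra. Qed.

Lemma IZR_nat_diff z : IZR z = INR (Z.to_nat z) - INR (Z.to_nat (- z)).
Proof.
rewrite !INR_IZR_INZ, <- minus_IZR. f_equal. lia.
Qed.

Lemma main_aux
 (baireR : forall F : nat -> R -> Prop,
 (forall n t, F n t -> exists eta, 0 < eta /\ forall s, Rabs (s - t) < eta -> F n s) ->
 (forall n t0 eta, 0 < eta -> exists t, Rabs (t - t0) < eta /\ F n t) ->
 exists t, forall n, F n t) (E : R -> Prop) :
  (exists u : R2, in_circle u /\ qi_embedding (sq E) (T u)) \/
  (exists S : R4 -> R, linear4 S /\
     dense_in_R (fun y => exists x, pow4 E x /\ S x = y)).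
Proof.
destruct (classic (exists u : R2, in_circle u /\ qi_embedding (sq E) (T u))) as [H|H].
{ left; exact H. }
right.
assert (Hno : forall u, in_circle u -> ~ qi_embedding (sq E) (T u)).
{ intros u Hu Hq. apply H. exists u. auto. }
set (F := fun n t => exists a b c d, E a /\ E b /\ E c /\ E d /\
            Rabs ((a - c) - t * (b - d) - tgt n) < epsn n).
destruct (baireR F) as [t Ht].
- intros n t [a [b [c [d [Ea [Eb [Ec [Ed Hv]]]]]]]].
  set (v := (a - c) - t * (b - d) - tgt n) in *.
  set (g := epsn n - Rabs v).
  assert (Hg : 0 < g) by (unfold g; lra).
  assert (Hb : 0 < Rabs (b - d) + 1) by (pose proof (Rabs_pos (b - d)); lra).
  exists (g / (Rabs (b - d) + 1)). split.
  + apply Rdiv_lt_0_compat; lra.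
  + intros s Hs. exists a, b, c, d. repeat split; auto.
    replace ((a - c) - s * (b - d) - tgt n) with (v + (- ((s - t) * (b - d)))) by (unfold v; ring).
    eapply Rle_lt_trans; [apply Rabs_triang|].
    rewrite Rabs_Ropp, Rabs_mult.
    assert (Rabs (s - t) * Rabs (b - d) <= Rabs (s - t) * (Rabs (b - d) + 1)).
    { apply Rmult_le_compat_l; [apply Rabs_pos | lra]. }
    assert (Rabs (s - t) * (Rabs (b - d) + 1) < g).
    { apply (Rmult_lt_compat_r (Rabs (b - d) + 1)) in Hs; [|lra].
      replace (g / (Rabs (b - d) + 1) * (Rabs (b - d) + 1)) with g in Hs by (field; lra). exact Hs. }
    unfold g in *. lra.
- intros n t0 eta Heta.
  destruct (key E Hno t0 eta (tgt n) Heta) as [t [Ht [a [b [c [d [Ea [Eb [Ec [Ed Hv]]]]]]]]]].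
  exists t. split; auto. exists a, b, c, d. repeat split; auto.
  rewrite Hv. replace (tgt n - tgt n) with 0 by ring. rewrite Rabs_R0. apply epsn_pos.
- exists (fun x => match x with (a, b, c, d) => (a - c) - t * (b - d) end).
  split.
  + split.
    * intros [[[a b] c] d] [[[a' b'] c'] d']. simpl. ring.
    * intros k [[[a b] c] d]. simpl. ring.
  + intros r eps Heps.
    destruct (archimed_cor1 (eps / 2)) as [N [HN HN0]]; [lra|].
    assert (HNp : 0 < INR N) by (apply lt_0_INR; exact HN0).
    set (M := INR N + 1).
    assert (HM : 0 < M) by (unfold M; lra).
    set (z := up (r * M)).
    destruct (archimed (r * M)) as [Hz1 Hz2]. fold z in Hz1, Hz2.
    set (n := Cantor.to_nat (Cantor.to_nat (Z.to_nat z, Z.to_nat (- z)), N)).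
    assert (Htg : tgt n = IZR z / M).
    { unfold tgt, n. rewrite Cantor.cancel_of_to. cbn [fst snd]. rewrite Cantor.cancel_of_to. cbn [fst snd]. rewrite (IZR_nat_diff z). reflexivity. }
    assert (Hep : epsn n = / M).
    { unfold epsn, n. rewrite !Cantor.cancel_of_to. reflexivity. }
    assert (HMN : / M < eps / 2).
    { apply Rlt_trans with (/ INR N); [|exact HN]. apply Rinv_lt_contravar; [nra | unfold M; lra]. }
    destruct (Ht n) as [a [b [c [d [Ea [Eb [Ec [Ed Hv]]]]]]]].
    exists ((a - c) - t * (b - d)). split.
    * exists (a, b, c, d). simpl. auto.
    * rewrite Htg, Hep in Hv.
      assert (Hr : Rabs (r - IZR z / M) <= / M).
      { replace (r - IZR z / M) with (- ((IZR z - r * M) / M)) by (field; lra).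
        rewrite Rabs_Ropp. unfold Rdiv. rewrite Rabs_mult, Rabs_inv, (Rabs_right M) by lra.
        rewrite Rabs_right by lra.
        rewrite <- (Rmult_1_l (/ M)) at 2. apply Rmult_le_compat_r; [left; apply Rinv_0_lt_compat; lra | lra]. }
      replace (r - (a - c - t * (b - d))) with ((r - IZR z / M) + - ((a - c - t * (b - d)) - IZR z / M)) by ring.
      eapply Rle_lt_trans; [apply Rabs_triang|]. rewrite Rabs_Ropp. clear - Hv Hr HMN. lra.
Qed.

From mathcomp Require Import all_boot all_order all_algebra.
From mathcomp Require Import all_classical all_reals all_analysis.
From mathcomp Require Import Rstruct Rstruct_topology.
Import numFieldNormedType.Exports.
Open Scope R_scope.

Lemma baireR (F : nat -> R -> Prop) :
 (forall n t, F n t -> exists eta, 0 < eta /\ forall s, Rabs (s - t) < eta -> F n s) ->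
 (forall n t0 eta, 0 < eta -> exists t, Rabs (t - t0) < eta /\ F n t) ->
 exists t, forall n, F n t.
Proof.
move=> Hop Hde.
have HB : dense (T:=R^o) (\bigcap_i (F i)).
  apply: Baire => i; split.
  + rewrite openE => t Ft.
    rewrite /interior.
    apply/nbhs_ballP.
    have [eta [eta0 H]] := Hop i t Ft.
    exists eta; first by apply/RltP.
    move=> s; rewrite -ball_normE /ball_ /= => /RltP Hs.
    apply: H. rewrite Rabs_minus_sym. exact: Hs.
  + move=> O [x Ox] oO.
    have : nbhs (x : R^o) O by rewrite openE in oO; exact: oO.
    move/nbhs_ballP => [e /RltP e0 He].
    have [t [Ht Ft]] := Hde i x e e0.
    exists t; split => //.
    apply: He. rewrite -ball_normE /ball_ /=. apply/RltP.
    change (Rabs (x - t) < e). rewrite Rabs_minus_sym. exact: Ht.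
have H1 : exists x : R^o, (setT : set R^o) x by exists (0 : R).
have [t [_ Ht]] := HB setT H1 openT.
exists t => n. exact: Ht.
Qed.

Theorem lemma3p3 (E : R -> Prop) :
  (exists u : R2, in_circle u /\ qi_embedding (sq E) (T u)) \/
  (exists S : R4 -> R, linear4 S /\
     dense_in_R (fun y => exists x, pow4 E x /\ S x = y)).
Proof. exact (main_aux baireR E). Qed.
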